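(* Let $n\ge2$, $\preceq$ an admissible order on $L([0,1])$, $G\colon L([0,1])^n\to L([0,1])$ non-decreasing with $G(\mathbf0,\dots,\mathbf0)=\mathbf0$ and $G(\mathbf1,\dots,\mathbf1)=\mathbf1$, and $F\colon L([0,1])^2\to L([0,1])$ non-decreasing in the first variable with $F(\mathbf0,Y)=\mathbf0$ and $F(\mathbf1,Y)=\mathbf1$ for all $Y\in L([0,1])$. Then the IV Sugeno-like $FG$-functional $\mathbf S_m^{F,G}$ is an $n$-dimensional IV aggregation function w.r.t. $\preceq$ for every symmetric IV fuzzy measure $m$.
   Context: $N=\{1,\dots,n\}$. $L([0,1])=\{[a,b]:0\le a\le b\le1\}$, $\mathbf0=[0,0]$, $\mathbf1=[1,1]$. An admissible order $\preceq$ is a total order on $L([0,1])$ with $[a,b]\preceq[c,d]$ whenever $a\le c$, $b\le d$. Monotonicity is w.r.t. $\preceq$. An $n$-dimensional IV aggregation function w.r.t. $\preceq$ is $M\colon L([0,1])^n\to L([0,1])$ with $M(\mathbf0,\dots,\mathbf0)=\mathbf0$, $M(\mathbf1,\dots,\mathbf1)=\mathbf1$, non-decreasing in each component w.r.t. $\preceq$. An IV fuzzy measure w.r.t. $\preceq$ is $m\colon2^N\to L([0,1])$, $m(\emptyset)=\mathbf0$, $m(N)=\mathbf1$, $m(A)\preceq m(B)$ for $A\subseteq B$; symmetric if $m(A)=m(B)$ whenever $|A|=|B|$. For a permutation $\sigma$, $E_{\sigma(i)}=\{\sigma(i),\dots,\sigma(n)\}$. $\mathbf S_m^{F,G}(X_1,\dots,X_n)=G\big(F(X_{\sigma(1)},m(E_{\sigma(1)})),\dots,F(X_{\sigma(n)},m(E_{\sigma(n)}))\big)$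 with $\sigma$ any permutation such that $X_{\sigma(1)}\preceq\dots\preceq X_{\sigma(n)}$ (independent of the choice of $\sigma$ for symmetric $m$). *)

(* Defs.v *)
From HB Require Import structures.
From mathcomp Require Import all_boot all_order all_algebra all_fingroup.
From mathcomp Require Import reals.
Set Implicit Arguments. Unset Strict Implicit. Unset Printing Implicit Defensive.
Import Order.TTheory GRing.Theory Num.Theory.
Local Open Scope ring_scope.

(* L([0,1]) : closed subintervals [a,b] of [0,1], represented by (a,b). *)
Definition ivl (R : realType) :=
  {p : R * R | (0 <= p.1) && (p.1 <= p.2) && (p.2 <= 1)}.

Definition lo {R : realType} (X : ivl R) : R := (val X).1.
Definition hi {R : realType} (X : ivl R) : R := (val X).2.

Lemma ivl0_proof (R : realType) :
  (0 <= ((0:R),(0:R)).1) && (((0:R),(0:R)).1 <= ((0:R),(0:R)).2) && (((0:R),(0:R)).2 <= 1).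
Proof. by rewrite /= lexx ler01. Qed.
Lemma ivl1_proof (R : realType) :
  (0 <= ((1:R),(1:R)).1) && (((1:R),(1:R)).1 <= ((1:R),(1:R)).2) && (((1:R),(1:R)).2 <= 1).
Proof. by rewrite /= lexx ler01. Qed.

Definition ivl0 (R : realType) : ivl R := exist _ (0, 0) (ivl0_proof R).
Definition ivl1 (R : realType) : ivl R := exist _ (1, 1) (ivl1_proof R).

Definition admissible (R : realType) (le : rel (ivl R)) : Prop :=
  [/\ reflexive le, antisymmetric le, transitive le, total le &
      forall X Y : ivl R, lo X <= lo Y -> hi X <= hi Y -> le X Y].

Definition upd {R : realType} {n : nat} (X : 'I_n -> ivl R) (i : 'I_n) (Y : ivl R)
  : 'I_n -> ivl R := fun j => if j == i then Y else X j.

Definition nondecr_each (R : realType) (n : nat) (le : rel (ivl R))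
  (M : ('I_n -> ivl R) -> ivl R) : Prop :=
  forall (X : 'I_n -> ivl R) (i : 'I_n) (Y : ivl R),
    le (X i) Y -> le (M X) (M (upd X i Y)).

Definition IV_aggregation (R : realType) (n : nat) (le : rel (ivl R))
  (M : ('I_n -> ivl R) -> ivl R) : Prop :=
  [/\ M (fun _ => ivl0 R) = ivl0 R, M (fun _ => ivl1 R) = ivl1 R &
      nondecr_each le M].

Definition IV_fuzzy_measure (R : realType) (n : nat) (le : rel (ivl R))
  (m : {set 'I_n} -> ivl R) : Prop :=
  [/\ m set0 = ivl0 R, m setT = ivl1 R &
      forall A B : {set 'I_n}, A \subset B -> le (m A) (m B)].

Definition symmetric_measure (R : realType) (n : nat) (m : {set 'I_n} -> ivl R) : Prop :=
  forall A B : {set 'I_n}, #|A| = #|B| -> m A = m B.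

Definition Eset (n : nat) (s : {perm 'I_n}) (i : 'I_n) : {set 'I_n} :=
  [set s j | j in [pred j : 'I_n | (i <= j)%N]].

Definition sorting (R : realType) (n : nat) (le : rel (ivl R))
  (X : 'I_n -> ivl R) (s : {perm 'I_n}) : bool :=
  [forall i : 'I_n, forall j : 'I_n, (i <= j)%N ==> le (X (s i)) (X (s j))].

(* IV Sugeno-like FG-functional; computed with some sorting permutation
   (one always exists when le is total; the value is independent of the
   choice for symmetric m). *)
Definition sugenoFG (R : realType) (n : nat) (le : rel (ivl R))
  (m : {set 'I_n} -> ivl R) (F : ivl R -> ivl R -> ivl R)
  (G : ('I_n -> ivl R) -> ivl R) (X : 'I_n -> ivl R) : ivl R :=
  match [pick s : {perm 'I_n} | sorting le X s] with
  | Some s => G (fun i => F (X (s i)) (m (Eset s i)))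
  | None => ivl0 R
  end.

(* Main.v *)
Require Import Defs.
From HB Require Import structures.
From mathcomp Require Import all_boot all_order all_algebra all_fingroup.
From mathcomp Require Import reals.
From Stdlib Require Import FunctionalExtensionality.
Import Order.TTheory GRing.Theory Num.Theory.
Local Open Scope ring_scope.
Set Implicit Arguments. Unset Strict Implicit.

Section Aux.
Variables (R : realType) (n : nat) (le : rel (ivl R)).
Hypotheses (refl : reflexive le) (tr : transitive le) (tot : total le).

Lemma exists_sorting (X : 'I_n -> ivl R) : exists s, sorting le X s.
Proof.
pose r := fun i j : 'I_n => le (X i) (X j).
have rtot : total r by move=> i j; exact: tot.
have rtr : transitive r by move=> i j k; rewrite /r => H1 H2; exact: tr H1 H2.
pose t := sort r (enum 'I_n).
have pt : perm_eq t (enum 'I_n) by rewrite /t; apply/permPl/perm_sort.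
have st : size t = n by rewrite (perm_size pt) size_enum_ord.
have ut : uniq t by rewrite (perm_uniq pt) enum_uniq.
have sot : sorted r t by apply: sort_sorted.
pose f := fun i : 'I_n => nth i t i.
have finj : injective f.
  move=> i j; rewrite /f => E.
  have Ei : nth i t i = nth i t j.
    by rewrite E; apply: set_nth_default; rewrite st.
  have hi : (i < size t)%N by rewrite st.
  have hj : (j < size t)%N by rewrite st.
  apply/val_inj/eqP; rewrite -(nth_uniq i hi hj ut); exact/eqP.
exists (perm finj); apply/forallP => i; apply/forallP => j; apply/implyP => hij.
rewrite !permE /f (set_nth_default i j); last by rewrite st.
have := @sorted_leq_nth _ r rtr (fun x => refl (X x)) i t sot i j.
by apply; rewrite ?inE ?st.
Qed.

Lemma sorting_le (X : 'I_n -> ivl R) s (i j : 'I_n) :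
  sorting le X s -> (i <= j)%N -> le (X (s i)) (X (s j)).
Proof. by move=> /forallP/(_ i)/forallP/(_ j)/implyP. Qed.

Lemma ostat (X X' : 'I_n -> ivl R) s s' :
  sorting le X s -> sorting le X' s' -> (forall i, le (X i) (X' i)) ->
  forall k, le (X (s k)) (X' (s' k)).
Proof.
move=> hs hs' hX k.
pose A := [set s' j | j in [pred j : 'I_n | (j <= k)%N]].
pose B := [set s j | j in [pred j : 'I_n | (j < k)%N]].
have cAB : (#|B| < #|A|)%N.
  rewrite /A /B !card_imset; try exact: perm_inj.
  apply: proper_card; apply/properP; split.
    by apply/subsetP => j; rewrite !inE => /ltnW.
  by exists k; rewrite !inE ?leqnn ?ltnn.
have : ~~ (A \subset B).
  by apply/negP => /subset_leq_card; rewrite leqNgt cAB.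
case/subsetPn => t /imsetP [j]; rewrite inE => hjk -> hB.
have hp : (k <= (s^-1)%g (s' j))%N.
  rewrite leqNgt; apply/negP => hl; move/negP: hB; apply.
  by apply/imsetP; exists ((s^-1)%g (s' j)); rewrite ?inE // permKV.
have h1 := sorting_le hs hp; rewrite permKV in h1; apply: (tr h1).
exact: (tr (hX _) (sorting_le hs' hjk)).
Qed.

Lemma G_mono (G : ('I_n -> ivl R) -> ivl R) :
  nondecr_each le G -> forall U V, (forall i, le (U i) (V i)) -> le (G U) (G V).
Proof.
move=> hG U V hUV.
pose W k := fun i : 'I_n => if (i < k)%N then V i else U i.
have : forall k, le (G U) (G (W k)).
  elim=> [|k IH].
    have -> : W 0%N = U by apply: functional_extensionality => i.
    exact: refl.
  case: (ltnP k n) => hk; last first.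
    have -> : W k.+1 = W k.
      apply: functional_extensionality => i; rewrite /W.
      have h1 := ltn_ord i.
      by rewrite (leq_trans h1 hk) (leq_trans h1 (leqW hk)).
    exact: IH.
  have -> : W k.+1 = upd (W k) (Ordinal hk) (V (Ordinal hk)).
    apply: functional_extensionality => i; rewrite /W /upd ltnS leq_eqVlt.
    case: (i =P Ordinal hk) => [->|ne] /=; first by rewrite eqxx.
    have -> // : (nat_of_ord i == k) = false.
    by apply/negP => /eqP e; apply: ne; apply/val_inj.
  apply: (tr IH (hG _ _ _ _)); rewrite /W /= ltnn; exact: hUV.
move/(_ n); have -> // : W n = V.
by apply: functional_extensionality => i; rewrite /W ltn_ord.
Qed.

End Aux.

Theorem corollary7 (R : realType) (n : nat) (le : rel (ivl R))
  (G : ('I_n -> ivl R) -> ivl R) (F : ivl R -> ivl R -> ivl R) :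
  (2 <= n)%N ->
  admissible le ->
  nondecr_each le G ->
  G (fun _ => ivl0 R) = ivl0 R ->
  G (fun _ => ivl1 R) = ivl1 R ->
  (forall X X' Y : ivl R, le X X' -> le (F X Y) (F X' Y)) ->
  (forall Y : ivl R, F (ivl0 R) Y = ivl0 R) ->
  (forall Y : ivl R, F (ivl1 R) Y = ivl1 R) ->
  forall m : {set 'I_n} -> ivl R,
    IV_fuzzy_measure le m -> symmetric_measure m ->
    IV_aggregation le (sugenoFG le m F G).
Proof.
move=> _ [refl _ tr tot _] hG G0 G1 hF F0 F1 m _ msym.
split.
- rewrite /sugenoFG; case: pickP => [s _|] //.
  have -> : (fun i => F (ivl0 R) (m (Eset s i))) = fun _ => ivl0 R.
    by apply: functional_extensionality => i; rewrite F0.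
  exact: G0.
- rewrite /sugenoFG; case: pickP => [s _|]; last first.
    move=> Hn; have [s hs] := exists_sorting refl tr tot (fun _ : 'I_n => ivl1 R); by move: (Hn s); rewrite hs.
  have -> : (fun i => F (ivl1 R) (m (Eset s i))) = fun _ => ivl1 R.
    by apply: functional_extensionality => i; rewrite F1.
  exact: G1.
- move=> X i Y hY; rewrite /sugenoFG.
  case: pickP => [s hs|]; last first.
    move=> Hn; have [s hs] := exists_sorting refl tr tot X; by move: (Hn s); rewrite hs.
  case: pickP => [s' hs'|]; last first.
    move=> Hn; have [s' hs'] := exists_sorting refl tr tot (upd X i Y); by move: (Hn s'); rewrite hs'.
  apply: (G_mono refl tr hG) => k.
  have -> : m (Eset s k) = m (Eset s' k).
    by apply: msym; rewrite /Eset !card_imset //; exact: perm_inj.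
  apply: hF; apply: (ostat tr hs hs') => j.
  rewrite /upd; case: eqP => [->|]; [exact: hY | move=> _; exact: refl].
Qed.
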